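(* Let $\nu$ be a class (ii) distribution with associated functions $f,\varphi,\Phi$ and assume one of the following: (i) $\Phi^{-1}$ is pseudo-regularly varying; (ii) $\nu$ is a Weibull distribution with shape $k\in(0,1)$ and scale $\lambda>0$ (with $\Phi(x)=(x/\lambda)^k$); (iii) $\nu$ is a generalized lognormal distribution with $r>1$ (with $\Phi(x)=\frac{1}{r\sigma^r}\log(x)^r$). Let $\theta>1$ and let $\eta$ be a distribution with density $g$ such that $\liminf_{x\to\infty}x^{t+1}g(x)>0$ for some $t\in(1,\theta)$. Then $D_{F_\Phi}(\eta|\nu)=\infty$.
   Context: Densities are written $f=e^{-\varphi}$. For strictly convex $F$ with $F(1)=0$, $D_F(\eta|\nu)=\int_0^\infty F(g/f)f\,dx$ if $\eta\ll\nu$ and $+\infty$ otherwise. Class (ii): $\lim_{x\to\infty}\varphi(x)/x=0$, $\lim_{x\to\infty}\varphi(x)/\log x=\infty$, and there exist $\bar x>0$ and $\Phi:\mathbb R_+\to\mathbb R$ positive, strictly concave, twice differentiable and increasing on $[\bar x,\infty)$ such that, with $\Phi^{-1}$ the inverse of $\Phi|_{[\bar x,\infty)}$, $0<\liminf_{x\to\infty}\Phi^{-1}(\varphi(x))/x\le\limsup_{x\to\infty}\Phi^{-1}(\varphi(x))/x<\infty$. With $\bar y=\exp(\Phi(\bar x))$: $F_\Phi(y)=y\log y$ for $y\le\bar y$ and $F_\Phi(y)=a\,y\,\Phi^{-1}(\log y)^\theta+b$ for $y>\bar y$, where $a=\frac{1+\log\bar y}{\Phi^{-1}(\log\bar y)^\theta+\theta\Phi^{-1}(\log\bar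 y)^{\theta-1}(\Phi^{-1})'(\log\bar y)}$, $b=\bar y\log\bar y-a\bar y\Phi^{-1}(\log\bar y)^\theta$. A measurable $h:\mathbb R_+\to(0,\infty)$ is pseudo-regularly varying if $\limsup_{c\to1}\limsup_{x\to\infty}h(cx)/h(x)=1$. The Weibull density with scale $\lambda>0$, shape $k\in(0,1)$ is $f(x)=\frac{k}{\lambda}(x/\lambda)^{k-1}e^{-(x/\lambda)^k}$ for $x\ge0$. The generalized lognormal density is $f(x)=\frac{1}{Zx}\exp\!\big(-\frac{1}{r\sigma^r}|\log x-\mu|^r\big)$, $x>0$, with $Z=2r^{1/r}\sigma\Gamma(1+1/r)$, $r>1$, $\sigma>0$, $\mu\in\mathbb R$. *)

(* Defs.v *)
From Stdlib Require Import Reals Lra.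
Open Scope R_scope.

(** Right derivative of [h] at [x] equals [l] (used for (Phi^{-1})' at the
    left end point log ybar = Phi xbar of the domain of Phi^{-1}). *)
Definition right_deriv (h : R -> R) (x l : R) : Prop :=
  forall eps, 0 < eps -> exists delta, 0 < delta /\
    forall e, 0 < e < delta -> Rabs ((h (x + e) - h x) / e - l) < eps.

Definition is_inverse_on (Phi Phiinv : R -> R) (xbar : R) : Prop :=
  (forall x, xbar <= x -> Phiinv (Phi x) = x) /\
  (forall y, Phi xbar <= y -> xbar <= Phiinv y /\ Phi (Phiinv y) = y).

(** Class (ii), with density f = exp(-phi) and associated xbar, Phi. *)
Definition class_ii (phi Phi Phiinv : R -> R) (xbar : R) : Prop :=
  (forall eps, 0 < eps -> exists X, forall x, X < x -> Rabs (phi x / x) < eps) /\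
  (forall M, exists X, 1 < X /\ forall x, X < x -> M < phi x / ln x) /\
  0 < xbar /\
  (forall x, xbar <= x -> 0 < Phi x) /\
  (forall x y, xbar <= x -> x <= y -> Phi x <= Phi y) /\
  (forall x y l, xbar <= x -> x < y -> 0 < l < 1 ->
     l * Phi x + (1 - l) * Phi y < Phi (l * x + (1 - l) * y)) /\
  (exists dPhi d2Phi : R -> R, forall x, xbar <= x ->
     derivable_pt_lim Phi x (dPhi x) /\ derivable_pt_lim dPhi x (d2Phi x)) /\
  is_inverse_on Phi Phiinv xbar /\
  (exists alpha X, 0 < alpha /\ forall x, X < x -> alpha <= Phiinv (phi x) / x) /\
  (exists beta X, forall x, X < x -> Phiinv (phi x) / x <= beta).

(** The function F_Phi (depends on Phi through xbar, Phi xbar, Phi^{-1} and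
    the value dinv = (Phi^{-1})'(log ybar)). *)
Definition ybar (Phi : R -> R) (xbar : R) : R := exp (Phi xbar).

Definition coef_a (Phi Phiinv : R -> R) (xbar theta dinv : R) : R :=
  let yb := ybar Phi xbar in
  (1 + ln yb) /
  (Rpower (Phiinv (ln yb)) theta
   + theta * Rpower (Phiinv (ln yb)) (theta - 1) * dinv).

Definition coef_b (Phi Phiinv : R -> R) (xbar theta dinv : R) : R :=
  let yb := ybar Phi xbar in
  yb * ln yb - coef_a Phi Phiinv xbar theta dinv * yb * Rpower (Phiinv (ln yb)) theta.

Definition F_Phi (Phi Phiinv : R -> R) (xbar theta dinv : R) (y : R) : R :=
  if Rle_dec y (ybar Phi xbar) then y * ln y
  else coef_a Phi Phiinv xbar theta dinv * y * Rpower (Phiinv (ln y)) theta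
       + coef_b Phi Phiinv xbar theta dinv.

(** Pseudo-regular variation:
    limsup_{c -> 1, c <> 1} limsup_{x -> oo} h(cx)/h(x) = 1. *)
Definition pseudo_regularly_varying (h : R -> R) : Prop :=
  (forall eps, 0 < eps -> exists delta, 0 < delta /\
     forall c, 0 < Rabs (c - 1) < delta ->
       exists X, forall x, X < x -> h (c * x) / h x <= 1 + eps) /\
  (forall eps delta, 0 < eps -> 0 < delta -> exists c, 0 < Rabs (c - 1) < delta /\
     forall X, exists x, X < x /\ 1 - eps <= h (c * x) / h x).

Definition improper_int_0_inf (h : R -> R) (L : R) : Prop :=
  forall eps, 0 < eps -> exists B0, 0 < B0 /\ forall B, B0 <= B ->
    exists pr : Riemann_integrable h 0 B, Rabs (RiemannInt pr - L) < eps.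

Definition is_Gamma (z G : R) : Prop :=
  improper_int_0_inf (fun s => Rpower s (z - 1) * exp (- s)) G.

Definition weibull_density (lambda k x : R) : R :=
  k / lambda * Rpower (x / lambda) (k - 1) * exp (- Rpower (x / lambda) k).

Definition gen_lognormal_density (Z r sigma mu x : R) : R :=
  / (Z * x) * exp (- (/ (r * Rpower sigma r)) * Rpower (Rabs (ln x - mu)) r).

(** "The integral of h over (0,oo) is +oo", in the (strong) sense that h lies
    above step functions on compact subintervals of (0,oo) with arbitrarily
    large integrals (the lower Riemann integral is +oo). *)
Definition integral_diverges (h : R -> R) : Prop :=
  forall M, exists a b, 0 < a < b /\ exists s : StepFun a b,
    (forall x, a <= x <= b -> s x <= h x) /\ M <= RiemannInt_SF s.

Definition divergence_infinite (F f g : R -> R) : Prop :=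
  integral_diverges (fun x => F (g x / f x) * f x).

(* Main.v *)
Require Import Defs.
From Stdlib Require Import Reals Lra.
From Coquelicot Require Import Coquelicot.
Open Scope R_scope.
Open Scope R_scope.

Lemma abs_le' x y : Rabs x <= y -> -y <= x <= y.
Proof. unfold Rabs; destruct (Rcase_abs x); intros; lra. Qed.
Lemma abs_lt' x y : Rabs x < y -> -y < x < y.
Proof. unfold Rabs; destruct (Rcase_abs x); intros; lra. Qed.

Lemma step_below (k h : R -> R) a b (pr : Riemann_integrable k a b) :
  a <= b -> (forall x, a <= x <= b -> k x <= h x) ->
  exists s : StepFun a b, (forall x, a <= x <= b -> s x <= h x) /\
    RiemannInt pr - 2 <= RiemannInt_SF s.
Proof.
  intros Hab Hkh.
  unfold RiemannInt; destruct (RiemannInt_exists pr RinvN RinvN_cv) as [l Hl].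
  destruct (Hl 1 Rlt_0_1) as [N HN].
  specialize (HN N (le_n N)). unfold Rdist in HN.
  destruct (phi_sequence_prop RinvN pr N) as [psi [H1 H2]].
  set (phi := phi_sequence RinvN pr N) in *.
  exists (mkStepFun (StepFun_P28 (-1) phi psi)).
  split.
  - intros x Hx. simpl.
    assert (Hm : Rmin a b <= x <= Rmax a b).
    { rewrite Rmin_left, Rmax_right; lra. }
    specialize (H1 x Hm). specialize (Hkh x Hx).
    apply abs_le' in H1. lra.
  - rewrite StepFun_P30.
    assert (HR : RinvN N <= 1).
    { unfold RinvN; simpl. pose proof (pos_INR N).
      rewrite <- Rinv_1. apply Rinv_le_contravar; lra. }
    apply abs_lt' in HN. apply abs_lt' in H2. lra.
Qed.

Lemma integral_div (K X : R) (h : R -> R) :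
  0 < K -> 0 < X -> (forall x, X <= x -> K / x <= h x) -> integral_diverges h.
Proof.
  intros HK HX Hh M.
  set (b := X * exp ((Rabs M + 2) / K)).
  assert (Hb : X < b).
  { unfold b. assert (1 < exp ((Rabs M + 2) / K)).
    { rewrite <- exp_0. apply exp_increasing. apply Rdiv_lt_0_compat; try lra.
      pose proof (Rabs_pos M); lra. }
    nra. }
  exists X, b. split; [lra|].
  assert (Hcont : forall x, X <= x <= b -> continuity_pt (fun x => K / x) x).
  { intros x Hx. apply continuity_pt_div.
    apply continuity_pt_const; intros u v; reflexivity.
    apply derivable_continuous_pt, derivable_pt_id. lra. }
  pose (pr := continuity_implies_RiemannInt (Rlt_le _ _ Hb) Hcont).
  assert (HI : RiemannInt pr = K * ln b - K * ln X).
  { rewrite <- (RInt_Reals _ _ _ pr). apply is_RInt_unique.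
    apply (is_RInt_derive (fun x => K * ln x)).
      - intros x Hx. rewrite Rmin_left in Hx by lra. rewrite Rmax_right in Hx by lra.
        auto_derive. lra. field. lra.
      - intros x Hx. rewrite Rmin_left in Hx by lra. rewrite Rmax_right in Hx by lra.
        apply continuity_pt_filterlim. apply Hcont. lra. }
  destruct (step_below (fun x => K / x) h X b pr) as [s [Hs1 Hs2]].
  lra. intros x Hx; apply Hh; lra.
  exists s. split; [exact Hs1|].
  assert (Hl : ln b = ln X + (Rabs M + 2) / K).
  { unfold b. rewrite ln_mult; [|lra|apply exp_pos]. rewrite ln_exp. reflexivity. }
  rewrite HI, Hl in Hs2.
  replace (K * (ln X + (Rabs M + 2) / K) - K * ln X) with (Rabs M + 2) in Hs2 by (field; lra).
  pose proof (Rle_abs M). lra.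
Qed.
Lemma ln_le' x y : 0 < x -> x <= y -> ln x <= ln y.
Proof. intros H1 [H2|H2]. left; apply ln_increasing; lra. subst; lra. Qed.

Lemma ln_div' x y : 0 < x -> 0 < y -> ln (x / y) = ln x - ln y.
Proof.
  intros. assert (ln x = ln (x / y * y)) by (f_equal; field; lra).
  rewrite ln_mult in H1 by (try apply Rdiv_lt_0_compat; lra). lra.
Qed.

Definition ev (P : R -> Prop) := exists X, forall x, X < x -> P x.
Lemma ev_and (P Q : R -> Prop) : ev P -> ev Q -> ev (fun x => P x /\ Q x).
Proof.
  intros [X1 H1] [X2 H2]. exists (Rmax X1 X2). intros x Hx.
  split; [apply H1|apply H2]; pose proof (Rmax_l X1 X2); pose proof (Rmax_r X1 X2); lra.
Qed.
Lemma ev_mono (P Q : R -> Prop) : ev P -> (forall x, P x -> Q x) -> ev Q.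
Proof. intros [X H] HPQ. exists X. auto. Qed.
Lemma ev_gt c : ev (fun x => c < x).
Proof. exists c. auto. Qed.

Lemma ev_phi (phi : R -> R)
  (Hphiln : forall M, exists X, 1 < X /\ forall x, X < x -> M < phi x / ln x) M :
  ev (fun x => 1 < ln x /\ M * ln x < phi x).
Proof.
  destruct (Hphiln M) as [X [HX H]]. exists (Rmax X (exp 1)). intros x Hx.
  pose proof (Rmax_l X (exp 1)); pose proof (Rmax_r X (exp 1)).
  assert (1 < ln x). { rewrite <- (ln_exp 1). apply ln_increasing. apply exp_pos. lra. }
  split; auto. specialize (H x ltac:(lra)).
  apply (Rmult_lt_compat_r (ln x)) in H; [|lra].
  unfold Rdiv in H. rewrite Rmult_assoc, Rinv_l in H; lra.
Qed.

Lemma ev_phi_big (phi : R -> R)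
  (Hphiln : forall M, exists X, 1 < X /\ forall x, X < x -> M < phi x / ln x) B :
  ev (fun x => B < phi x).
Proof.
  apply (ev_mono _ _ (ev_phi phi Hphiln (Rabs B))).
  intros x [H1 H2]. pose proof (Rle_abs B). pose proof (Rabs_pos B). nra.
Qed.

Lemma G1 (phi g : R -> R) (t c0 X0 rho : R)
  (Hphiln : forall M, exists X, 1 < X /\ forall x, X < x -> M < phi x / ln x)
  (Ht : 0 < t) (Hc0 : 0 < c0) (HX0 : forall x, X0 < x -> c0 <= Rpower x (t + 1) * g x)
  (Hrho : 0 < rho < 1) :
  ev (fun x => 1 < x /\ 1 < ln x /\ 0 < g x /\ c0 / Rpower x (t + 1) <= g x /\
     rho * phi x <= ln (g x / exp (- phi x))).
Proof.
  set (M := ((t + 1) + Rabs (ln c0)) / (1 - rho)).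
  apply (ev_mono _ _ (ev_and _ _ (ev_phi phi Hphiln M) (ev_and _ _ (ev_gt X0) (ev_gt 1)))).
  intros x [[Hl Hp] [Hx0 Hx1]].
  specialize (HX0 x Hx0).
  assert (HP : 0 < Rpower x (t + 1)) by (unfold Rpower; apply exp_pos).
  assert (Hg : c0 / Rpower x (t + 1) <= g x).
  { apply (Rmult_le_reg_l (Rpower x (t + 1))); auto. field_simplify; lra. }
  assert (Hg0 : 0 < c0 / Rpower x (t + 1)) by (apply Rdiv_lt_0_compat; auto).
  repeat split; try lra.
  rewrite ln_div' by (try apply exp_pos; lra). rewrite ln_exp.
  pose proof (ln_le' _ _ Hg0 Hg) as Hlg.
  rewrite ln_div', ln_Rpower in Hlg by lra.
  assert (HM : M * (1 - rho) = (t + 1) + Rabs (ln c0)) by (unfold M; field; lra).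
  pose proof (Rle_abs (- ln c0)). rewrite Rabs_Ropp in H.
  pose proof (Rabs_pos (ln c0)).
  assert ((1 - rho) * (M * ln x) < (1 - rho) * phi x) by (apply Rmult_lt_compat_l; lra).
  assert (Rabs (ln c0) <= Rabs (ln c0) * ln x) by nra.
  nra.
Qed.
Lemma inv_ge (Phi Phiinv : R -> R) xbar
  (Hmono : forall x y, xbar <= x -> x <= y -> Phi x <= Phi y)
  (Hinv : is_inverse_on Phi Phiinv xbar) z Y :
  xbar <= z -> Phi z <= Y -> z <= Phiinv Y.
Proof.
  destruct Hinv as [Hi1 Hi2]. intros Hz HY.
  assert (HY' : Phi xbar <= Y) by (pose proof (Hmono xbar z (Rle_refl _) Hz); lra).
  destruct (Hi2 Y HY') as [Hw1 Hw2].
  destruct (Rle_lt_dec z (Phiinv Y)) as [H|H]; auto.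
  pose proof (Hmono _ _ Hw1 (Rlt_le _ _ H)). rewrite Hw2 in H0.
  assert (Phi z = Y) by lra.
  pose proof (Hi1 z Hz). rewrite H1 in H2. lra.
Qed.

Lemma inv_mono (Phi Phiinv : R -> R) xbar
  (Hmono : forall x y, xbar <= x -> x <= y -> Phi x <= Phi y)
  (Hinv : is_inverse_on Phi Phiinv xbar) Y1 Y2 :
  Phi xbar <= Y1 -> Y1 <= Y2 -> Phiinv Y1 <= Phiinv Y2.
Proof.
  intros H1 H2. destruct (proj2 Hinv Y1 H1) as [Ha Hb].
  apply (inv_ge Phi Phiinv xbar Hmono Hinv); auto. lra.
Qed.

Lemma coef_a_pos (Phi Phiinv : R -> R) xbar theta dinv
  (Hmono : forall x y, xbar <= x -> x <= y -> Phi x <= Phi y)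
  (Hinv : is_inverse_on Phi Phiinv xbar) (Hxbar : 0 < xbar) (HP : 0 < Phi xbar)
  (Hth : 1 < theta)
  (Hdinv : right_deriv Phiinv (ln (ybar Phi xbar)) dinv) :
  0 < coef_a Phi Phiinv xbar theta dinv.
Proof.
  unfold right_deriv, ybar in Hdinv. rewrite ln_exp in Hdinv.
  unfold coef_a, ybar. rewrite ln_exp.
  rewrite (proj1 Hinv xbar (Rle_refl _)).
  assert (Hd : 0 <= dinv).
  { destruct (Rle_lt_dec 0 dinv) as [H|H]; auto.
    destruct (Hdinv (- dinv) ltac:(lra)) as [d [Hd1 Hd2]].
    specialize (Hd2 (d / 2) ltac:(lra)).
    destruct (proj2 Hinv (Phi xbar + d / 2) ltac:(lra)) as [Hw _].
    rewrite (proj1 Hinv xbar (Rle_refl _)) in Hd2.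
    apply Rabs_def2 in Hd2. destruct Hd2 as [Hd2 _].
    assert ((Phiinv (Phi xbar + d / 2) - xbar) / (d / 2) < 0) by lra.
    assert (0 <= (Phiinv (Phi xbar + d / 2) - xbar) / (d / 2)).
    { unfold Rdiv; apply Rmult_le_pos; [lra|]. left; apply Rinv_0_lt_compat; lra. }
    lra. }
  apply Rdiv_lt_0_compat; [lra|].
  assert (0 < Rpower xbar theta) by (unfold Rpower; apply exp_pos).
  assert (0 < Rpower xbar (theta - 1)) by (unfold Rpower; apply exp_pos).
  assert (0 <= theta * Rpower xbar (theta - 1) * dinv).
  { apply Rmult_le_pos; [|lra]. apply Rmult_le_pos; lra. }
  lra.
Qed.

Lemma rp_le_x x s : 1 < x -> s <= 1 -> Rpower x s <= x.
Proof. intros. rewrite <- (Rpower_1 x) at 2 by lra. apply Rle_Rpower; lra. Qed.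

Lemma case_i (phi Phi Phiinv : R->R) xbar (Lg : R -> R) s alpha
 (Hmono : forall x y, xbar <= x -> x <= y -> Phi x <= Phi y)
 (Hinv : is_inverse_on Phi Phiinv xbar) (Hxbar: 0<xbar)
 (Hs : 0 < s <= 1)
 (HG1 : forall rho, 0 < rho < 1 -> ev (fun x => rho * phi x <= Lg x))
 (Hbig : forall B, ev (fun x => B < phi x))
 (Halpha : 0 < alpha) (Hal : ev (fun x => alpha * x <= Phiinv (phi x)))
 (Hpr : pseudo_regularly_varying Phiinv) :
 exists kappa, 0 < kappa /\ ev (fun x => kappa * Rpower x s <= Phiinv (Lg x)).
Proof.
  destruct Hpr as [Hpr _]. destruct (Hpr 1 Rlt_0_1) as [d [Hd Hc]].
  set (c := 1 + d / 2).
  destruct (Hc c) as [Xc HXc].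
  { unfold c. replace (1 + d / 2 - 1) with (d / 2) by ring. rewrite Rabs_right; lra. }
  exists (alpha / 2). split; [lra|].
  assert (Hc0 : 0 < / c < 1).
  { unfold c. split. apply Rinv_0_lt_compat; lra. rewrite <- Rinv_1. apply Rinv_lt_contravar; lra. }
  apply (ev_mono _ _ (ev_and _ _ (HG1 _ Hc0) (ev_and _ _
     (Hbig (c * (Rabs Xc + Rabs (Phi xbar) + 1))) (ev_and _ _ Hal (ev_gt 1))))).
  intros x [H1 [H2 [H3 H4]]].
  set (y := phi x / c).
  assert (Hcpos : 0 < c) by (unfold c; lra).
  assert (Hy : Rabs Xc + Rabs (Phi xbar) + 1 < y).
  { unfold y. apply (Rmult_lt_reg_l c); auto. replace (c * (phi x / c)) with (phi x) by (field; lra). lra. }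
  pose proof (Rle_abs Xc). pose proof (Rle_abs (Phi xbar)). pose proof (Rabs_pos Xc). pose proof (Rabs_pos (Phi xbar)).
  assert (HyX : Xc < y) by lra.
  assert (HyP : Phi xbar <= y) by lra.
  specialize (HXc y HyX).
  replace (c * y) with (phi x) in HXc by (unfold y; field; lra).
  destruct (proj2 Hinv y HyP) as [Hpy _].
  assert (Hpy0 : 0 < Phiinv y) by lra.
  assert (Phiinv (phi x) <= 2 * Phiinv y).
  { apply (Rmult_le_compat_r (Phiinv y)) in HXc; [|lra].
    unfold Rdiv in HXc. rewrite Rmult_assoc, Rinv_l in HXc; lra. }
  assert (Hly : y <= Lg x) by (unfold y; unfold Rdiv; rewrite Rmult_comm; lra).
  pose proof (inv_mono Phi Phiinv xbar Hmono Hinv y (Lg x) HyP Hly).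
  pose proof (rp_le_x x s H4 (proj2 Hs)).
  nra.
Qed.

Lemma case_ii (phi Phi Phiinv : R->R) xbar (Lg : R -> R) s alpha lambda k
 (Hmono : forall x y, xbar <= x -> x <= y -> Phi x <= Phi y)
 (Hinv : is_inverse_on Phi Phiinv xbar) (Hxbar: 0<xbar)
 (Hs : 0 < s <= 1)
 (HG1 : forall rho, 0 < rho < 1 -> ev (fun x => rho * phi x <= Lg x))
 (Hbig : forall B, ev (fun x => B < phi x))
 (Halpha : 0 < alpha) (Hal : ev (fun x => alpha * x <= Phiinv (phi x)))
 (Hl : 0 < lambda) (Hk : 0 < k < 1)
 (HPhi : forall x, 0 < x -> Phi x = Rpower (x / lambda) k) :
 exists kappa, 0 < kappa /\ ev (fun x => kappa * Rpower x s <= Phiinv (Lg x)).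
Proof.
  set (q := Rpower (/ 2) (/ k)).
  assert (Hq : 0 < q) by (unfold q, Rpower; apply exp_pos).
  exists (q * alpha). split; [apply Rmult_lt_0_compat; auto|].
  assert (Hh : 0 < / 2 < 1) by lra.
  apply (ev_mono _ _ (ev_and _ _ (HG1 _ Hh) (ev_and _ _
     (Hbig (Phi xbar)) (ev_and _ _ Hal (ev_and _ _ (ev_gt 1) (ev_and _ _ (ev_gt (xbar / (q * alpha))) (ev_gt (xbar / alpha)))))))).
  intros x [H1 [H2 [H3 [H4 [H5 H6]]]]].
  assert (Hqa : 0 < q * alpha) by (apply Rmult_lt_0_compat; auto).
  assert (Hz : xbar <= q * alpha * x).
  { apply (Rmult_lt_compat_l (q * alpha)) in H5; auto.
    unfold Rdiv in H5. rewrite (Rmult_comm xbar), <- Rmult_assoc, Rinv_r in H5; lra. }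
  assert (Hax : xbar <= alpha * x).
  { apply (Rmult_lt_compat_l alpha) in H6; auto.
    unfold Rdiv in H6. rewrite (Rmult_comm xbar), <- Rmult_assoc, Rinv_r in H6; lra. }
  destruct (proj2 Hinv (phi x) ltac:(lra)) as [_ Hpp].
  assert (HPa : Phi (alpha * x) <= phi x).
  { rewrite <- Hpp. apply Hmono; auto. }
  assert (HPz : Phi (q * alpha * x) = / 2 * Phi (alpha * x)).
  { rewrite !HPhi by nra.
    replace (q * alpha * x / lambda) with (q * (alpha * x / lambda)) by (field; lra).
    rewrite <- Rpower_mult_distr; auto.
    unfold q at 1. rewrite Rpower_mult. rewrite Rinv_l by lra. rewrite Rpower_1 by lra. reflexivity.
    apply Rdiv_lt_0_compat; nra. }
  assert (Phi (q * alpha * x) <= Lg x) by lra.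
  pose proof (inv_ge Phi Phiinv xbar Hmono Hinv _ _ Hz H).
  pose proof (rp_le_x x s H4 (proj2 Hs)).
  assert (q * alpha * Rpower x s <= q * alpha * x) by (apply Rmult_le_compat_l; lra).
  lra.
Qed.

Lemma ev_ln B : ev (fun x => B < ln x).
Proof.
  exists (exp B). intros x Hx. rewrite <- (ln_exp B). apply ln_increasing; auto. apply exp_pos.
Qed.

Lemma case_iii (phi Phi Phiinv : R->R) xbar (Lg : R -> R) s alpha r sigma
 (Hmono : forall x y, xbar <= x -> x <= y -> Phi x <= Phi y)
 (Hinv : is_inverse_on Phi Phiinv xbar) (Hxbar: 0<xbar)
 (Hs : 0 < s < 1)
 (HG1 : forall rho, 0 < rho < 1 -> ev (fun x => rho * phi x <= Lg x))
 (Hbig : forall B, ev (fun x => B < phi x))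
 (Halpha : 0 < alpha) (Hal : ev (fun x => alpha * x <= Phiinv (phi x)))
 (Hr : 1 < r) (Hsig : 0 < sigma)
 (HPhi : forall x, 1 < x -> Phi x = / (r * Rpower sigma r) * Rpower (ln x) r) :
 exists kappa, 0 < kappa /\ ev (fun x => kappa * Rpower x s <= Phiinv (Lg x)).
Proof.
  exists 1. split; [lra|].
  set (rp := (1 + s) / 2).
  set (rho := Rpower rp r).
  assert (Hrho : 0 < rho < 1).
  { split. unfold rho, Rpower; apply exp_pos.
    unfold rho. eapply Rlt_le_trans; [apply Rlt_Rpower_l with (b := 1); unfold rp; lra|].
    right; unfold Rpower; rewrite ln_1, Rmult_0_r; apply exp_0. }
  set (C := / (r * Rpower sigma r)).
  assert (HC : 0 < C).
  { unfold C. apply Rinv_0_lt_compat. apply Rmult_lt_0_compat; [lra|]. unfold Rpower; apply exp_pos. }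
  apply (ev_mono _ _ (ev_and _ _ (HG1 _ Hrho) (ev_and _ _
     (Hbig (Phi xbar)) (ev_and _ _ Hal (ev_and _ _ (ev_gt 1) (ev_and _ _ (ev_gt (Rmax 1 xbar / alpha))
       (ev_and _ _ (ev_ln (Rabs (ln xbar) / s)) (ev_ln (2 * rp * Rabs (ln alpha) / (1 - s)))))))))).
  intros x [H1 [H2 [H3 [H4 [H5 [H6 H7]]]]]].
  assert (Hm : 1 <= Rmax 1 xbar /\ xbar <= Rmax 1 xbar) by (split; [apply Rmax_l|apply Rmax_r]).
  assert (Hax : Rmax 1 xbar < alpha * x).
  { apply (Rmult_lt_compat_l alpha) in H5; auto.
    unfold Rdiv in H5. rewrite (Rmult_comm (Rmax 1 xbar)), <- Rmult_assoc, Rinv_r in H5; lra. }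
  destruct (proj2 Hinv (phi x) ltac:(lra)) as [_ Hpp].
  assert (HPa : Phi (alpha * x) <= phi x).
  { rewrite <- Hpp. apply Hmono; lra. }
  assert (Hlx : 0 < ln x) by (rewrite <- ln_1; apply ln_increasing; lra).
  assert (Hsl : Rabs (ln xbar) < s * ln x).
  { apply (Rmult_lt_compat_l s) in H6; [|lra].
    unfold Rdiv in H6. rewrite (Rmult_comm (Rabs _)), <- Rmult_assoc, Rinv_r in H6; lra. }
  set (z := Rpower x s).
  assert (Hlz : ln z = s * ln x) by (unfold z; apply ln_Rpower).
  assert (Hz1 : 1 < z).
  { unfold z, Rpower. rewrite <- exp_0. apply exp_increasing. nra. }
  assert (Hzx : xbar <= z).
  { unfold z, Rpower. rewrite <- (exp_ln xbar) by lra. left. apply exp_increasing.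
    pose proof (Rle_abs (ln xbar)). lra. }
  assert (Hlax : ln (alpha * x) = ln alpha + ln x) by (apply ln_mult; lra).
  assert (Hlax0 : 0 < ln (alpha * x)) by (rewrite <- ln_1; apply ln_increasing; lra).
  assert (Hcmp : s * ln x <= rp * ln (alpha * x)).
  { rewrite Hlax. apply (Rmult_lt_compat_l (1 - s)) in H7; [|lra].
    unfold Rdiv in H7. rewrite (Rmult_comm (2 * rp * _)), <- Rmult_assoc, Rinv_r in H7 by lra.
    pose proof (Rle_abs (- ln alpha)). rewrite Rabs_Ropp in H.
    unfold rp in *. nra. }
  assert (HPz : Phi z <= rho * Phi (alpha * x)).
  { rewrite !HPhi by lra. fold C. rewrite Hlz.
    unfold rho. rewrite (Rmult_comm (Rpower rp r)), Rmult_assoc.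
    apply Rmult_le_compat_l; [lra|].
    rewrite Rmult_comm, Rpower_mult_distr by (unfold rp; lra).
    apply Rle_Rpower_l; [lra|]. split; [nra|]. lra. }
  assert (Phi z <= Lg x).
  { assert (rho * Phi (alpha * x) <= rho * phi x) by (apply Rmult_le_compat_l; lra). lra. }
  pose proof (inv_ge Phi Phiinv xbar Hmono Hinv _ _ Hzx H). fold z. lra.
Qed.

Lemma div_ev (h : R -> R) K : 0 < K -> ev (fun x => K / x <= h x) -> integral_diverges h.
Proof.
  intros HK [X HX]. apply (integral_div K (Rmax X 1 + 1) h HK).
  pose proof (Rmax_r X 1); lra.
  intros x Hx. apply HX. pose proof (Rmax_l X 1); lra.
Qed.

Theorem proposition4p5
  (phi Phi Phiinv : R -> R) (xbar dinv theta t : R) (g : R -> R)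
  (Hclass : class_ii phi Phi Phiinv xbar)
  (Hdinv : right_deriv Phiinv (ln (ybar Phi xbar)) dinv)
  (Hcases :
     pseudo_regularly_varying Phiinv
     \/ (exists lambda k, 0 < lambda /\ 0 < k < 1 /\
           (forall x, 0 < x -> exp (- phi x) = weibull_density lambda k x) /\
           (forall x, 0 < x -> Phi x = Rpower (x / lambda) k))
     \/ (exists r sigma mu G, 1 < r /\ 0 < sigma /\ is_Gamma (1 + / r) G /\
           (forall x, 0 < x -> exp (- phi x) =
               gen_lognormal_density (2 * Rpower r (/ r) * sigma * G) r sigma mu x) /\
           (forall x, 1 < x -> Phi x = / (r * Rpower sigma r) * Rpower (ln x) r)))
  (Htheta : 1 < theta)
  (Hg_nonneg : forall x, 0 < x -> 0 <= g x)
  (Ht : 1 < t < theta)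
  (Hliminf : exists c X, 0 < c /\ forall x, X < x -> c <= Rpower x (t + 1) * g x) :
  divergence_infinite (F_Phi Phi Phiinv xbar theta dinv) (fun x => exp (- phi x)) g.
Proof.
  destruct Hclass as (Hphix & Hphiln & Hxbar & HPhipos & HPhimono & _ & _ & Hinv & [alpha [Xa [Halpha HXa]]] & _).
  destruct Hliminf as [c0 [X0 [Hc0 HX0]]].
  assert (Ha : 0 < coef_a Phi Phiinv xbar theta dinv)
    by (apply coef_a_pos; auto; apply HPhipos; lra).
  set (a := coef_a Phi Phiinv xbar theta dinv) in *.
  set (b := coef_b Phi Phiinv xbar theta dinv).
  set (Lg := fun x => ln (g x / exp (- phi x))).
  assert (HG1 : forall rho, 0 < rho < 1 -> ev (fun x => rho * phi x <= Lg x)).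
  { intros rho Hrho. apply (ev_mono _ _ (G1 phi g t c0 X0 rho Hphiln ltac:(lra) Hc0 HX0 Hrho)).
    intros x H; unfold Lg; tauto. }
  assert (Hbig : forall B, ev (fun x => B < phi x)) by (intro; apply ev_phi_big; auto).
  assert (Hal : ev (fun x => alpha * x <= Phiinv (phi x))).
  { exists (Rmax Xa 0). intros x Hx. pose proof (Rmax_l Xa 0); pose proof (Rmax_r Xa 0).
    specialize (HXa x ltac:(lra)). apply (Rmult_le_compat_r x) in HXa; [|lra].
    unfold Rdiv in HXa. rewrite Rmult_assoc, Rinv_l in HXa; lra. }
  set (s := t / theta).
  assert (Hs : 0 < s < 1).
  { unfold s; split. apply Rdiv_lt_0_compat; lra.
    apply (Rmult_lt_reg_r theta); [lra|]. unfold Rdiv; rewrite Rmult_assoc, Rinv_l; lra. }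
  assert (HC : exists kappa, 0 < kappa /\ ev (fun x => kappa * Rpower x s <= Phiinv (Lg x))).
  { destruct Hcases as [Hpr | [[lam [k [Hl [Hk [_ HP]]]]] | [r [sig [mu [G [Hr [Hsig [_ [_ HP]]]]]]]]]].
    - apply (case_i phi Phi Phiinv xbar Lg s alpha); auto; lra.
    - apply (case_ii phi Phi Phiinv xbar Lg s alpha lam k); auto; lra.
    - apply (case_iii phi Phi Phiinv xbar Lg s alpha r sig); auto. }
  destruct HC as [kappa [Hk HC]].
  assert (Hkt : 0 < Rpower kappa theta) by (unfold Rpower; apply exp_pos).
  set (K0 := a * c0 * Rpower kappa theta).
  assert (HK0 : 0 < K0) by (unfold K0; apply Rmult_lt_0_compat; [apply Rmult_lt_0_compat|]; auto).
  unfold divergence_infinite.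
  apply (div_ev _ (K0 / 2)); [lra|].
  assert (Hh : 0 < / 2 < 1) by lra.
  apply (ev_mono _ _ (ev_and _ _ (G1 phi g t c0 X0 (/ 2) Hphiln ltac:(lra) Hc0 HX0 Hh)
    (ev_and _ _ HC (ev_and _ _ (Hbig (2 * Rabs (Phi xbar) + 1))
    (ev_and _ _ (ev_phi phi Hphiln 2) (ev_gt (2 * Rabs b / K0))))))).
  intros x [[H1 [H2 [H3 [H4 H5]]]] [H6 [H7 [[H8 H9] H10]]]].
  unfold Lg in H6.
  set (ef := exp (- phi x)) in *.
  assert (Hef : 0 < ef) by apply exp_pos.
  set (y := g x / ef) in *.
  assert (Hy : 0 < y) by (apply Rdiv_lt_0_compat; auto).
  assert (Hyb : ybar Phi xbar < y).
  { unfold ybar. rewrite <- (exp_ln y) by auto. apply exp_increasing.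
    pose proof (Rle_abs (Phi xbar)). lra. }
  unfold F_Phi. destruct (Rle_dec y (ybar Phi xbar)) as [Hc|_]; [lra|].
  fold a b.
  set (P := Phiinv (ln y)) in *.
  assert (Hxs : 0 < Rpower x s) by (unfold Rpower; apply exp_pos).
  assert (HP0 : 0 < kappa * Rpower x s) by (apply Rmult_lt_0_compat; auto).
  assert (HPt : Rpower kappa theta * Rpower x t <= Rpower P theta).
  { replace (Rpower x t) with (Rpower (Rpower x s) theta).
    rewrite Rpower_mult_distr by lra.
    apply Rle_Rpower_l; lra.
    rewrite Rpower_mult. f_equal. unfold s. field. lra. }
  assert (Hxt : Rpower x (t + 1) = Rpower x t * x).
  { rewrite Rpower_plus, Rpower_1; lra. }
  assert (Hxt0 : 0 < Rpower x t) by (unfold Rpower; apply exp_pos).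
  assert (Hmain : K0 / x <= a * g x * Rpower P theta).
  { rewrite Hxt in H4.
    apply Rle_trans with (a * (c0 / (Rpower x t * x)) * (Rpower kappa theta * Rpower x t)).
    - right. unfold K0. field. split; lra.
    - apply Rmult_le_compat; try lra.
      + apply Rmult_le_pos; [lra|]. left; apply Rdiv_lt_0_compat; nra.
      + apply Rmult_le_pos; lra.
      + apply Rmult_le_compat_l; lra. }
  assert (Hef2 : ef <= / (x * x)).
  { unfold ef. rewrite <- (exp_ln x) at 2 3 by lra.
    rewrite <- exp_plus, <- exp_Ropp. left. apply exp_increasing. lra. }
  assert (Hb : Rabs b * / (x * x) <= K0 / 2 / x).
  { apply (Rmult_le_reg_r (x * x)); [nra|].
    replace (K0 / 2 / x * (x * x)) with (K0 * x / 2) by (field; lra).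
    rewrite Rmult_assoc, Rinv_l by nra.
    apply (Rmult_lt_compat_l K0) in H10; auto.
    unfold Rdiv in H10. rewrite (Rmult_comm (2 * Rabs b)), <- Rmult_assoc, Rinv_r in H10; lra. }
  assert (Hbe : - (K0 / 2 / x) <= b * ef).
  { pose proof (Rabs_pos b). pose proof (Rle_abs (- b)) as Hab. rewrite Rabs_Ropp in Hab.
    assert (Rabs b * ef <= Rabs b * / (x * x)) by (apply Rmult_le_compat_l; lra).
    nra. }
  replace ((a * y * Rpower P theta + b) * ef) with (a * g x * Rpower P theta + b * ef).
  2: { unfold y. field. lra. }
  assert (K0 / x = 2 * (K0 / 2 / x)) by (field; lra).
  lra.
Qed.
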